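(* Let $\alpha,\beta,\gamma,x\in\mathbb{N}_0$ with $(\alpha,\beta,\gamma,x)\neq(0,0,0,0)$, let $\lambda$ be a nonnegative integer and $n$ a nonnegative integer. Then $$A^{\lambda,x}_{n+1}(\alpha,\beta,\gamma)=\gamma\, A^{\lambda,x}_n(\alpha,\beta,\gamma+\alpha)+x\lambda\beta\, A^{\lambda+1,x}_n(\alpha,\beta,\gamma+\beta+\alpha).$$
   Context: For a number $t$ and $\alpha$, the generalised factorial is $(t|\alpha)_n=\prod_{j=0}^{n-1}(t-j\alpha)$ for $n\ge 1$ and $(t|\alpha)_0=1$. For parameters $\alpha,\beta,\gamma$, the generalised Stirling numbers $S(n,k,\alpha,\beta,\gamma)$ ($0\le k\le n$) are defined by the polynomial identity $(t|\alpha)_n=\sum_{k=0}^{n}S(n,k,\alpha,\beta,\gamma)\,(t-\gamma|\beta)_k$ in the variable $t$. For a nonnegative integer $\lambda$ put $\binom{k+\lambda-1}{k}=\lambda(\lambda+1)\cdots(\lambda+k-1)/k!$ (equal to $1$ for $k=0$). Define $$A^{\lambda,x}_n(\alpha,\beta,\gamma)=\sum_{k=0}^{n}\binom{k+\lambda-1}{k}(-1)^{n+k}\beta^k k!\,S(n,k,\alpha,-\beta,-\gamma)\,x^k .$$ *)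

(* Defs.v *)
From mathcomp Require Import all_boot all_order all_algebra.
Set Implicit Arguments. Unset Strict Implicit. Unset Printing Implicit Defensive.
Import Order.TTheory GRing.Theory Num.Theory.
Local Open Scope ring_scope.

(* Generalised factorial (t|a)_n = prod_{j<n} (t - j a), as a polynomial
   expression in a polynomial t (over int). (t|a)_0 = 1 (empty product). *)
Definition gfact (t : {poly int}) (a : int) (n : nat) : {poly int} :=
  \prod_(j < n) (t - (j%:R * a)%:P).

(* S is a family of generalised Stirling numbers: for all n, alpha, beta, gamma,
   (t|alpha)_n = sum_{k=0}^n S(n,k,alpha,beta,gamma) (t-gamma|beta)_k
   as an identity of polynomials in the variable t = 'X.
   (The coefficients are uniquely determined since (t-gamma|beta)_k is monic
   of degree k; so this property characterises S(n,k,.,.,.) for 0<=k<=n.) *)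
Definition is_gen_stirling (S : nat -> nat -> int -> int -> int -> int) : Prop :=
  forall (n : nat) (a b g : int),
    gfact 'X a n = \sum_(k < n.+1) S n k a b g *: gfact ('X - g%:P) b k.

(* binom(k+lam-1, k) = lam(lam+1)...(lam+k-1)/k!  (equals 1 for k = 0) *)
Definition rbinom (lam k : nat) : nat := 'C((k + lam).-1, k).

Definition Apoly (S : nat -> nat -> int -> int -> int -> int)
    (lam : nat) (x : int) (n : nat) (a b g : int) : int :=
  \sum_(k < n.+1) (rbinom lam k)%:R * (-1) ^+ (n + k) * b ^+ k * (k`!)%:R
                  * S n k a (- b) (- g) * x ^+ k.

(* Main.v *)
Require Import Defs.
From mathcomp Require Import all_boot all_order all_algebra.
From mathcomp Require Import ring.
Import Order.TTheory GRing.Theory Num.Theory.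
Local Open Scope ring_scope.

Definition Q (b g : int) (k : nat) : {poly int} := gfact ('X - (- g)%:P) (- b) k.

Lemma Qsucc b g k : Q b g k.+1 = Q b g k * ('X + (g + k%:R * b)%:P).
Proof.
rewrite /Q /gfact big_ord_recr /=; congr (_ * _).
rewrite !(rmorphN, rmorphD, rmorphM) /=; ring.
Qed.

Lemma Qrecl b g k : Q b g k.+1 = ('X + g%:P) * Q b (g + b) k.
Proof.
rewrite /Q /gfact big_ord_recl /=; congr (_ * _).
  rewrite !(rmorphN, rmorphD, rmorphM) /= mul0r; ring.
apply: eq_bigr => i _; rewrite /bump /= add1n -addn1 natrD.
rewrite !(rmorphN, rmorphD, rmorphM) /=; ring.
Qed.

Lemma Q_monic b g k : Q b g k \is monic.
Proof.
apply: monic_prod => j _.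
by rewrite -addrA -opprD -rmorphD monicXsubC.
Qed.

Lemma Q_size b g k : size (Q b g k) = k.+1.
Proof.
elim: k => [|k IH]; first by rewrite /Q /gfact big_ord0 size_poly1.
rewrite Qsucc size_Mmonic ?monicXaddC ?size_XaddC ?IH ?addn2 //.
by rewrite -size_poly_eq0 IH.
Qed.

Lemma uniqQ b g (d : nat -> int) m :
  \sum_(k < m) d k *: Q b g k = 0 -> forall k, (k < m)%N -> d k = 0.
Proof.
elim: m => [|m IH] H k Hk //.
move: H; rewrite big_ord_recr /= => H.
have Hm : d m = 0.
  have := congr1 (fun p : {poly int} => p`_m) H.
  rewrite coef0 coefD coef_sum coefZ.
  have /monicP := Q_monic b g m; rewrite /lead_coef Q_size /= => ->.
  rewrite big1 ?add0r ?mulr1 // => i _.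
  by rewrite coefZ nth_default ?mulr0 // Q_size.
move: H; rewrite Hm scale0r addr0 => H.
move: Hk; rewrite ltnS leq_eqVlt => /orP [/eqP -> //|Hk].
exact: IH.
Qed.
Definition C (S : nat -> nat -> int -> int -> int -> int) (a b : int) n k g :=
  if (k <= n)%N then S n k a (- b) (- g) else 0.

Lemma Cout S a b n k g : (n < k)%N -> C S a b n k g = 0.
Proof. by rewrite /C ltnNge => /negbTE ->. Qed.

Lemma expand S (HS : is_gen_stirling S) a b n g :
  gfact 'X a n = \sum_(k < n.+1) C S a b n k g *: Q b g k.
Proof.
rewrite (HS n a (- b) (- g)); apply: eq_bigr => k _.
by rewrite /C -ltnS ltn_ord.
Qed.

Lemma Qshift b g k :
  Q b g k.+1 = Q b (g + b) k.+1 - ((k.+1)%:R * b) *: Q b (g + b) k.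
Proof.
rewrite Qrecl Qsucc -mul_polyC !(rmorphN, rmorphD, rmorphM) /= -addn1 natrD rmorph1; ring.
Qed.

Lemma XQ b g k : 'X * Q b g k = Q b g k.+1 - (g + k%:R * b) *: Q b g k.
Proof. by rewrite Qsucc -mul_polyC; ring. Qed.

Lemma Q0 b g g' : Q b g 0 = Q b g' 0.
Proof. by rewrite /Q /gfact !big_ord0. Qed.

Lemma R2 S (HS : is_gen_stirling S) a b n g j :
  C S a b n j (g + b) = C S a b n j g - (j.+1)%:R * b * C S a b n j.+1 g.
Proof.
case: (leqP j n) => Hj; last by rewrite !Cout ?mulr0 ?subr0 // ltnW.
apply/eqP; rewrite -subr_eq0; apply/eqP.
pose d k := C S a b n k (g + b) - (C S a b n k g - (k.+1)%:R * b * C S a b n k.+1 g).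
apply: (@uniqQ b (g + b) d n.+1) => //.
under eq_bigr do rewrite scalerBl.
rewrite sumrB -(expand S HS a b n (g + b)) (expand S HS a b n g); apply/eqP; rewrite subr_eq0; apply/eqP.
under [RHS]eq_bigr do rewrite scalerBl.
rewrite sumrB [X in _ - X]big_ord_recr /= Cout // mulr0 scale0r addr0.
rewrite big_ord_recl [X in X - _]big_ord_recl (Q0 b g (g + b)).
rewrite -addrA; congr (_ + _).
rewrite -sumrB; apply: eq_bigr => i _.
rewrite lift0 Qshift scalerBr scalerA; congr (_ - _).
by rewrite mulrC.
Qed.

Lemma gfactS a n : gfact 'X a n.+1 = 'X * (gfact 'X a n \Po ('X - a%:P)).
Proof.
rewrite /gfact big_ord_recl rmorph_prod /= mul0r subr0; congr (_ * _).
apply: eq_bigr => i _; rewrite comp_polyB comp_polyX comp_polyC.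
rewrite /bump /= add1n -addn1 natrD !(rmorphN, rmorphD, rmorphM) /=; ring.
Qed.

Lemma compZ (c : int) (p q : {poly int}) : (c *: p) \Po q = c *: (p \Po q).
Proof. by rewrite -!mul_polyC comp_polyM comp_polyC. Qed.

Lemma comp_sumZ (R : comNzRingType) m (c : 'I_m -> R) (P : 'I_m -> {poly R}) q :
  (\sum_(i < m) c i *: P i) \Po q = \sum_(i < m) c i *: (P i \Po q).
Proof.
elim/big_rec2: _ => [|i x y _ <-]; first by rewrite comp_poly0.
by rewrite comp_polyD -!mul_polyC comp_polyM comp_polyC.
Qed.

Lemma Qcomp b g a k : Q b (g + a) k \Po ('X - a%:P) = Q b g k.
Proof.
rewrite /Q /gfact rmorph_prod /=; apply: eq_bigr => i _.
rewrite !comp_polyB comp_polyX !comp_polyC.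
rewrite !(rmorphN, rmorphD, rmorphM) /=; ring.
Qed.

Lemma R1 S (HS : is_gen_stirling S) a b n g k :
  C S a b n.+1 k g = (if k is k'.+1 then C S a b n k' (g + a) else 0)
                     - (g + k%:R * b) * C S a b n k (g + a).
Proof.
case: (leqP k n.+1) => Hk; last first.
  case: k Hk => // k Hk.
  by rewrite !Cout ?mulr0 ?subr0 // ltnW.
apply/eqP; rewrite -subr_eq0; apply/eqP.
pose d k := C S a b n.+1 k g - ((if k is k'.+1 then C S a b n k' (g + a) else 0)
                     - (g + k%:R * b) * C S a b n k (g + a)).
apply: (@uniqQ b g d n.+2) => //.
under eq_bigr do rewrite scalerBl.
have E : gfact 'X a n.+1 = \sum_(k < n.+1) C S a b n k (g + a) *: ('X * Q b g k).
  rewrite gfactS (expand S HS a b n (g + a)).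
  rewrite comp_sumZ.
  rewrite mulr_sumr; apply: eq_bigr => i _; rewrite -scalerAr; congr (_ *: (_ * _)).
  exact: Qcomp.
rewrite sumrB -(expand S HS a b n.+1 g) E.
apply/eqP; rewrite subr_eq0; apply/eqP.
under eq_bigr do rewrite XQ scalerBr scalerA.
rewrite sumrB; under [RHS]eq_bigr do rewrite scalerBl.
rewrite sumrB; congr (_ - _).
  rewrite [RHS]big_ord_recl [X in X + _]/= scale0r add0r.
  by apply: eq_bigr => i _; rewrite lift0.
rewrite [RHS]big_ord_recr /= Cout // mulr0 scale0r addr0.
by apply: eq_bigr => i _; rewrite mulrC.
Qed.

Definition W (x b : int) lam n k : int :=
  (rbinom lam k)%:R * (-1) ^+ (n + k) * b ^+ k * (k`!)%:R * x ^+ k.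

Lemma Aeq S a b g x lam n :
  Apoly S lam x n a b g = \sum_(k < n.+1) W x b lam n k * C S a b n k g.
Proof.
apply: eq_bigr => k _; rewrite /C -ltnS ltn_ord /W; ring.
Qed.

Lemma WN x b lam n k : W x b lam n.+1 k = - W x b lam n k.
Proof. rewrite /W addSn exprS; ring. Qed.

Lemma rbinomE lam k : (lam * rbinom lam.+1 k = k.+1 * rbinom lam k.+1)%N.
Proof.
rewrite /rbinom addnS addSn /= mul_bin_left.
by rewrite addnC addnK mulnC.
Qed.

Lemma WL x b lam n k : x * lam%:R * b * W x b lam.+1 n k = W x b lam n.+1 k.+1.
Proof.
have H : (lam%:R * (rbinom lam.+1 k)%:R = (k.+1)%:R * (rbinom lam k.+1)%:R :> int).
  by rewrite -!natrM rbinomE.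
rewrite /W addSn addnS !exprS factS natrM.
transitivity ((lam%:R * (rbinom lam.+1 k)%:R) * ((-1) ^+ (n + k) * (b * b ^+ k) * (k`!)%:R * (x * x ^+ k)) :> int).
  ring.
rewrite H; ring.
Qed.

Lemma main S (HS : is_gen_stirling S) (a b g x : int) lam n :
  Apoly S lam x n.+1 a b g
  = g * Apoly S lam x n a b (g + a)
    + x * lam%:R * b * Apoly S lam.+1 x n a b (g + b + a).
Proof.
set Ck := fun k => C S a b n k (g + a).
set T1 := \sum_(k < n.+1) W x b lam n k.+1 * Ck k.
set T2 := \sum_(k < n.+1) W x b lam n k * Ck k.
set T3 := \sum_(k < n.+1) W x b lam n k * (k%:R * b) * Ck k.
set T4 := \sum_(k < n.+1) W x b lam n k.+1 * (k.+1%:R * b) * Ck k.+1.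
have key : T3 = T4.
  rewrite /T3 big_ord_recl /=.
  rewrite /T4 big_ord_recr /= /Ck [C S a b n n.+1 _]Cout // mulr0 addr0.
  rewrite mul0r mulr0 mul0r add0r.
  by apply: eq_bigr => i _; rewrite /bump /= add1n.
rewrite !Aeq.
under eq_bigr do rewrite R1 //.
rewrite -/Ck.
under eq_bigr do rewrite mulrBr.
rewrite sumrB big_ord_recl [X in X + _ - _]/= mulr0 add0r.
rewrite [X in _ - X]big_ord_recr /= [C S a b n n.+1 _]Cout // !mulr0 addr0.
have EA : \sum_(i < n.+1) W x b lam n.+1 (bump 0 i) * C S a b n (0 + i) (g + a)
          = - T1.
  rewrite /T1 -sumrN; apply: eq_bigr => i _; rewrite /bump /= add1n add0n WN /Ck; ring.
have EB : \sum_(i < n.+1) W x b lam n.+1 i * ((g + i%:R * b) * C S a b n i (g + a))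
          = - (g * T2 + T3).
  rewrite /T2 /T3 mulr_sumr -big_split /= -sumrN; apply: eq_bigr => i _.
  rewrite WN /Ck; ring.
have EC : x * lam%:R * b * \sum_(k < n.+1) W x b lam.+1 n k * C S a b n k (g + b + a)
          = - T1 + T4.
  rewrite /T1 /T4 mulr_sumr -sumrN -big_split /=; apply: eq_bigr => i _.
  rewrite addrAC (R2 S HS) mulrA WL !WN /Ck; ring.
rewrite EA EB EC key.
change (\sum_(k < n.+1) W x b lam n k * C S a b n k (g + a)) with T2.
ring.
Qed.

Theorem theorem2 (S : nat -> nat -> int -> int -> int -> int)
    (HS : is_gen_stirling S) (a b g x lam n : nat)
    (Hnz : ~ [/\ a = 0%N, b = 0%N, g = 0%N & x = 0%N]) :
  Apoly S lam x%:Z n.+1 a%:Z b%:Z g%:Z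
  = g%:Z * Apoly S lam x%:Z n a%:Z b%:Z (g%:Z + a%:Z)
    + x%:Z * lam%:Z * b%:Z * Apoly S lam.+1 x%:Z n a%:Z b%:Z (g%:Z + b%:Z + a%:Z).
Proof. by rewrite (main S HS) natz. Qed.
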